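(* Let $X=\mathbb{CP}^2\#n\overline{\mathbb{CP}}^2$, $k\ge1$, and let $[\omega]\in\mathcal{P}^{c_1>0}$ be a $c_1$-nef symplectic class on $X$. For small $\varepsilon>0$ let $\omega_\varepsilon$ be the symplectic form on $X\#\overline{\mathbb{CP}}^2$ obtained by a blowup of size $\varepsilon$, i.e. with class $[\omega]-\varepsilon PD(E_{n+1})$. Then $\lim_{\varepsilon\to0}f_k(X\#\overline{\mathbb{CP}}^2,\omega_\varepsilon)=f_k(X,\omega)$.
   Context: $K_0=-3H+E_1+\cdots+E_n$ (and $-3H+E_1+\cdots+E_{n+1}$ on the blowup), $\mathrm{ind}(A):=A^2-K_0\cdot A$. For a rational manifold $Y=\mathbb{CP}^2\#m\overline{\mathbb{CP}}^2$ with symplectic form $\omega$ of standard canonical class, $f_k(Y,\omega)=\inf\{\omega(A):A\in H_2(Y;\mathbb{Z})\ J\text{-nef},\ \mathrm{ind}(A)\ge2k\}$ for any $\omega$-tame $J$ ($A$ is $J$-nef if it pairs nonnegatively with all classes of $J$-holomorphic subvarieties); it depends only on $[\omega]$ and equals $\inf\{\omega(A):\mathrm{ind}(A)\ge2k,\ A\cdot H>0\}$. With $H^2\cong\mathbb{R}^{n+1}$ via $(x_0,\dots,x_n)\leftrightarrow x_0PD(H)-\sum x_iPD(E_i)$, the reduced cone $\mathcal{P}$ is: $0<x_1<x_0$ ($n=1$); $0<x_2\le x_1$, $x_1+x_2<x_0$ ($n=2$); $0<x_n\le\cdots\le x_1$, $x_1+x_2+x_3\le x_0$, $\sum x_i^2<x_0^2$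 ($n\ge3$); $\mathcal{P}^{c_1>0}=\{[\omega]\in\mathcal{P}:\omega(3H-\sum E_i)>0\}$. *)

(* Defs.v *)
From HB Require Import structures.
From mathcomp Require Import all_boot all_order all_algebra.
From mathcomp Require Import all_classical all_reals all_analysis.
Set Implicit Arguments. Unset Strict Implicit. Unset Printing Implicit Defensive.
Import Order.TTheory GRing.Theory Num.Theory.
Local Open Scope classical_set_scope.
Local Open Scope ring_scope.

(* Rational manifold Y = CP^2 # m (-CP^2), H_2(Y;Z) with basis H, E_1..E_m.
   A class A = d H - sum_i e_i E_i is encoded by (d, e) with e : nat -> int,
   only the entries e 1, ..., e m being relevant.
   A cohomology class x0 PD(H) - sum_i x_i PD(E_i) is encoded by (x0, x)
   with x : nat -> R, only x 1, ..., x m being relevant. *)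

(* ind(A) = A^2 - K_0.A, K_0 = -3H + E_1 + ... + E_m:
   A^2 = d^2 - sum e_i^2, K_0.A = -3d + sum e_i. *)
Definition ind (m : nat) (d : int) (e : nat -> int) : int :=
  d ^+ 2 - (\sum_(1 <= i < m.+1) (e i) ^+ 2) + 3 * d - \sum_(1 <= i < m.+1) e i.

Definition pairing {R : realType} (m : nat) (x0 : R) (x : nat -> R)
  (d : int) (e : nat -> int) : R :=
  x0 * d%:~R - \sum_(1 <= i < m.+1) x i * (e i)%:~R.

(* f_k(Y, omega) = inf { omega(A) : ind(A) >= 2k, A.H > 0 } (A.H = d),
   taken in the extended reals. *)
Definition fk {R : realType} (m k : nat) (x0 : R) (x : nat -> R) : \bar R :=
  ereal_inf [set (pairing m x0 x A.1 A.2)%:E |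
              A in [set A : int * (nat -> int) |
                    ((2 * k)%:Z <= ind m A.1 A.2) /\ (0 < A.1)]].

Definition reduced_cone {R : realType} (n : nat) (x0 : R) (x : nat -> R) : Prop :=
  match n with
  | 0 => False
  | 1 => 0 < x 1%N /\ x 1%N < x0
  | 2 => (0 < x 2%N /\ x 2%N <= x 1%N) /\ x 1%N + x 2%N < x0
  | _ => (0 < x n /\ (forall i : nat, (1 <= i < n)%N -> x i.+1 <= x i))
         /\ x 1%N + x 2%N + x 3%N <= x0
         /\ \sum_(1 <= i < n.+1) (x i) ^+ 2 < x0 ^+ 2
  end.

(* P^{c_1>0}: reduced and omega(3H - sum E_i) = 3 x0 - sum x_i > 0 *)
Definition c1_pos_reduced {R : realType} (n : nat) (x0 : R) (x : nat -> R) : Prop :=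
  reduced_cone n x0 x /\ 0 < 3 * x0 - \sum_(1 <= i < n.+1) x i.

(* class of the blowup of size eps: [omega] - eps PD(E_{n+1}) *)
Definition blowup {R : realType} (n : nat) (x : nat -> R) (eps : R) : nat -> R :=
  fun i => if i == n.+1 then eps else x i.

(* Main.v *)
Require Import Defs.
From HB Require Import structures.
From mathcomp Require Import all_boot all_order all_algebra.
From mathcomp Require Import all_classical all_reals all_analysis.
From mathcomp Require Import ring lra zify.
Import Order.TTheory GRing.Theory Num.Theory.
Local Open Scope classical_set_scope.
Local Open Scope ring_scope.

Lemma castsum (R : numDomainType) n (e : nat -> int) :
  ((\sum_(1 <= i < n.+1) (e i ^+ 2 + e i))%:~R : R) = \sum_(1 <= i < n.+1) (((e i)%:~R : R) ^+ 2 + (e i)%:~R).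
Proof. rewrite rmorph_sum; apply: eq_bigr => i _. by rewrite rmorphD rmorphXn. Qed.

Lemma intsq_ge0 (t : int) : 0 <= t ^+ 2 + t.
Proof. rewrite expr2. nia. Qed.

Lemma int_facts (m k : nat) (d : int) (e : nat -> int) :
  (2 * k)%:Z <= ind m.+1 d e -> 0 < d ->
  [/\ (2 * k)%:Z <= ind m d e,
      \sum_(1 <= i < m.+1) (e i ^+ 2 + e i) <= d ^+ 2 + 3 * d &
      e m.+1 <= d + 1].
Proof.
rewrite /ind [\sum_(1 <= i < m.+2) e i ^+ 2]big_nat_recr // [\sum_(1 <= i < m.+2) e i]big_nat_recr //=.
have h0 : 0 <= \sum_(1 <= i < m.+1) (e i ^+ 2 + e i) by apply: sumr_ge0 => i _; exact: intsq_ge0.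
rewrite big_split /= in h0 *.
move: h0; set s := \sum_(1 <= i < m.+1) e i ^+ 2; set s' := \sum_(1 <= i < m.+1) e i.
move: (e m.+1) => t; rewrite !expr2 => h0 h1 hd.
have := intsq_ge0 t; rewrite expr2 => ht.
split; [lia|lia|nia].
Qed.

Lemma int_facts0 (m k : nat) (d : int) (e : nat -> int) :
  (2 * k)%:Z <= ind m d e ->
  \sum_(1 <= i < m.+1) (e i ^+ 2 + e i) <= d ^+ 2 + 3 * d.
Proof.
rewrite /ind big_split /=.
set s := \sum_(1 <= i < m.+1) e i ^+ 2; set s' := \sum_(1 <= i < m.+1) e i.
lia.
Qed.
Lemma key (R : realType) (n : nat) (x : nat -> R) (a d : R) (e : nat -> int) :
  0 < a -> \sum_(1 <= i < n.+1) x i ^+ 2 <= a ^+ 2 -> 1 <= d ->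
  \sum_(1 <= i < n.+1) (((e i)%:~R : R) ^+ 2 + (e i)%:~R) <= d ^+ 2 + 3 * d ->
  \sum_(1 <= i < n.+1) x i * (e i)%:~R <=
    a * d + (3 * a / 2 + a * n%:R / 8 - (\sum_(1 <= i < n.+1) x i) / 2).
Proof.
move=> a0 hS d1 he.
pose f i : R := (e i)%:~R + 1/2.
have E1 : \sum_(1 <= i < n.+1) x i * (e i)%:~R =
   \sum_(1 <= i < n.+1) x i * f i - (\sum_(1 <= i < n.+1) x i) / 2.
  rewrite /f; under [X in _ = X - _]eq_bigr do rewrite mulrDr.
  rewrite big_split /= -mulr_suml; lra.
have E2 : \sum_(1 <= i < n.+1) f i ^+ 2 =
   \sum_(1 <= i < n.+1) (((e i)%:~R : R) ^+ 2 + (e i)%:~R) + n%:R / 4.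
  rewrite (eq_bigr (fun i => (((e i)%:~R : R) ^+ 2 + (e i)%:~R) + 1/4)); last by move=> i _; rewrite /f; field.
  rewrite big_split /= sumr_const_nat subn1 /= -mulr_natr; lra.
have H : \sum_(1 <= i < n.+1) (2 * a * d) * (x i * f i) <=
         \sum_(1 <= i < n.+1) (a ^+ 2 * f i ^+ 2 + d ^+ 2 * x i ^+ 2).
  apply: ler_sum => i _; have := sqr_ge0 (a * f i - d * x i); nra.
rewrite big_split /= -!mulr_sumr in H.
rewrite E1.
move: H; rewrite E2.
set X := \sum_(1 <= i < n.+1) x i * f i.
set S := \sum_(1 <= i < n.+1) x i ^+ 2.
set G := \sum_(1 <= i < n.+1) _.
set T := \sum_(1 <= i < n.+1) x i.
move=> H.
have n0 : 0 <= (n%:R : R) by [].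
suff : 2 * a * d * X <= 2 * a * d * (a * d + (3 * a / 2 + a * n%:R / 8)).
  rewrite ler_pM2l; [lra| nra].
apply: (le_trans H).
have h1 : a ^+ 2 * (G + n%:R / 4) <= a ^+ 2 * (d ^+ 2 + 3 * d + n%:R / 4).
  rewrite ler_pM2l ?exprn_gt0 //. have he' : G <= d ^+ 2 + 3 * d by exact: he. lra.
have h2 : d ^+ 2 * S <= d ^+ 2 * a ^+ 2 by apply: ler_wpM2l; [exact: sqr_ge0 | exact: hS].
have h3 : a ^+ 2 * n%:R / 4 <= a ^+ 2 * n%:R * d / 4.
  have : 0 <= a ^+ 2 * n%:R * (d - 1) by apply: mulr_ge0; [nra|lra].
  lra.
have -> : 2 * a * d * (a * d + (3 * a / 2 + a * n%:R / 8)) = a ^+ 2 * (d ^+ 2 + 3 * d) + d ^+ 2 * a ^+ 2 + a ^+ 2 * n%:R * d / 4 by field.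
have -> : a ^+ 2 * (G + n%:R / 4) = a ^+ 2 * G + a ^+ 2 * n%:R / 4 by field.
move: h1; have -> : a ^+ 2 * (G + n%:R / 4) = a ^+ 2 * G + a ^+ 2 * n%:R / 4 by field.
have -> : a ^+ 2 * (d ^+ 2 + 3 * d + n%:R / 4) = a ^+ 2 * (d ^+ 2 + 3 * d) + a ^+ 2 * n%:R / 4 by field.
lra.
Qed.
Lemma cone_facts (R : realType) (n : nat) (x0 : R) (x : nat -> R) :
  (1 <= n)%N -> reduced_cone n x0 x ->
  0 < x0 /\ \sum_(1 <= i < n.+1) x i ^+ 2 < x0 ^+ 2.
Proof.
case: n => [//|[|[|n]]] _ /=.
- move=> [h1 h2]; rewrite big_nat1 /=; split; nra.
- move=> [[h1 h2] h3]; rewrite big_nat_recr // big_nat1 /=; have hx0 : 0 < x0 by lra. split => //; have := mulr_gt0 h1 (lt_le_trans h1 h2); nra.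
- move=> [[hn hdec] [h3 hS]]; split => //.
  have pos : forall j, (j <= n.+2)%N -> 0 < x (n.+3 - j)%N.
    elim=> [|j IH] hj; first by rewrite subn0.
    have := hdec (n.+3 - j.+1)%N; rewrite subnSK //.
    move=> H; apply: lt_le_trans (IH (ltnW hj)) _; apply: H.
    apply/andP; split; lia.
    lia.
  have p1 := pos n.+2 (leqnn _); have p2 := pos n.+1 (leqnSn _);
  have p3 := pos n (leqW (leqnSn _)).
  rewrite (_ : (n.+3 - n.+2 = 1)%N) in p1; last lia.
  rewrite (_ : (n.+3 - n.+1 = 2)%N) in p2; last lia.
  rewrite (_ : (n.+3 - n = 3)%N) in p3; last lia.
  lra.
Qed.

Lemma pairing_blowup (R : realType) n (x0 : R) x eps d e :
  pairing n.+1 x0 (blowup n x eps) d e = pairing n x0 x d e - eps * (e n.+1)%:~R.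
Proof.
rewrite /pairing big_nat_recr //= /blowup eqxx.
rewrite (@eq_big_nat _ _ _ 1 n.+1 _ (fun i => x i * (e i)%:~R)); first by ring.
by move=> i /andP[_ hi]; rewrite ltn_eqF.
Qed.

Definition ext (n : nat) (e : nat -> int) : nat -> int :=
  fun i => if i == n.+1 then 0 else e i.

Lemma sum_ext (V : zmodType) n e (F : int -> V) :
  \sum_(1 <= i < n.+1) F (ext n e i) = \sum_(1 <= i < n.+1) F (e i).
Proof. by apply: eq_big_nat => i /andP[_ hi]; rewrite /ext ltn_eqF. Qed.

Lemma ind_ext n d e : ind n.+1 d (ext n e) = ind n d e.
Proof.
rewrite /ind [\sum_(1 <= i < n.+2) ext n e i ^+ 2]big_nat_recr // [\sum_(1 <= i < n.+2) ext n e i]big_nat_recr //= {2 4}/ext eqxx.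
rewrite (sum_ext _ n e (fun z => z ^+ 2)) (sum_ext _ n e id) expr0n /=; ring.
Qed.

Lemma pairing_ext (R : realType) n (x0 : R) x eps d e :
  pairing n.+1 x0 (blowup n x eps) d (ext n e) = pairing n x0 x d e.
Proof.
rewrite pairing_blowup /pairing /ext eqxx mulr0 subr0.
congr (_ - _); apply: eq_big_nat => i /andP[_ hi]; by rewrite ltn_eqF.
Qed.


Theorem corollary4p7 (R : realType) (n k : nat) (x0 : R) (x : nat -> R) :
  (1 <= n)%N -> (1 <= k)%N -> c1_pos_reduced n x0 x ->
  fk n.+1 k x0 (blowup n x eps) @[eps --> 0^'+] --> fk n k x0 x.
Proof.
move=> hn hk [hr _].
have [hx0 hS] := @cone_facts R n x0 x hn hr.
set S := \sum_(1 <= i < n.+1) x i ^+ 2 in hS.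
have S0 : 0 <= S by apply: sumr_ge0 => i _; exact: sqr_ge0.
pose a := Num.sqrt ((x0 ^+ 2 + S) / 2).
have a2 : a ^+ 2 = (x0 ^+ 2 + S) / 2 by rewrite sqr_sqrtr //; lra.
have a0 : 0 < a by rewrite sqrtr_gt0; nra.
have ax0 : a < x0 by nra.
pose c := x0 - a.
have c0 : 0 < c by rewrite /c; lra.
pose K := 3 * a / 2 + a * n%:R / 8 - (\sum_(1 <= i < n.+1) x i) / 2.
have lowP : forall d e, 0 < d ->
    \sum_(1 <= i < n.+1) (e i ^+ 2 + e i) <= d ^+ 2 + 3 * d ->
    c * d%:~R - K <= pairing n x0 x d e.
  move=> d e hd he.
  have := @key R n x a d%:~R e a0 _ _ _.
  rewrite -/S /pairing /c /K => H.
  have he' := he; rewrite -(ler_int R) castsum rmorphD rmorphXn rmorphM /= in he'.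
  have := H ltac:(lra) ltac:(by rewrite ler1z) he'.
  lra.
have fin_of : forall (z : \bar R) (l u : R), (l%:E <= z)%E -> (z <= u%:E)%E -> z = (fine z)%:E.
  by move=> z l u; case: z.
have fkX_lb : ((c - K)%:E <= fk n k x0 x)%E.
  apply: le_ereal_inf_tmp => _ [[d e] /= [hi hd] <-].
  rewrite lee_fin.
  have := lowP d e hd (int_facts0 _ _ _ _ hi).
  have : 1 <= (d%:~R : R) by rewrite ler1z.
  nra.
have fkX_ub : (fk n k x0 x <= (x0 * k%:R)%:E)%E.
  apply: ge_ereal_inf; exists (x0 * k%:R)%:E => //.
  exists (k%:Z, fun _ => 0) => /=.
    split; last by lia.
    rewrite /ind !big1 // => *; rewrite ?expr0n //.
    rewrite expr2; lia.
  rewrite /pairing big1 ?subr0 // => *; by rewrite mulr0.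
set r := fine (fk n k x0 x).
have fkXr : fk n k x0 x = r%:E := fin_of _ _ _ fkX_lb fkX_ub.
have rK : c - K <= r by rewrite -lee_fin -fkXr.
pose g eps := fk n.+1 k x0 (blowup n x eps).
have g_ub : forall eps, (g eps <= r%:E)%E.
  move=> eps; rewrite -fkXr; apply: le_ereal_inf_tmp => _ [[d e] /= [hi hd] <-].
  apply: ereal_inf_lbound; exists (d, ext n e) => /=.
    by rewrite ind_ext.
  by rewrite pairing_ext.
have g_lb : forall eps, 0 < eps -> eps < c ->
    (((1 - eps / c) * r - eps / c * K - eps)%:E <= g eps)%E.
  move=> eps e0 ec; apply: le_ereal_inf_tmp => _ [[d e] /= [hi hd] <-].
  have [hiX hsum ht] := int_facts _ _ _ _ hi hd.
  rewrite lee_fin pairing_blowup.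
  have P1 : r <= pairing n x0 x d e.
    rewrite -lee_fin -fkXr; apply: ereal_inf_lbound; by exists (d, e).
  have P2 := lowP d e hd hsum.
  have ht' : ((e n.+1)%:~R : R) <= d%:~R + 1.
    by rewrite -(ler_int R) rmorphD /= in ht.
  set th := eps / c.
  have epsE : eps = th * c by rewrite /th mulrVK ?unitfE ?gt_eqF.
  have th0 : 0 < th by rewrite /th divr_gt0.
  have th1 : th < 1 by rewrite /th ltr_pdivrMr // mul1r.
  rewrite epsE.
  set P := pairing n x0 x d e in P1 P2 *.
  have q1 : 0 <= (1 - th) * (P - r) by apply: mulr_ge0; lra.
  have q2 : 0 <= th * (P - c * d%:~R + K) by apply: mulr_ge0; lra.
  have q3 : 0 <= th * c * (d%:~R + 1 - (e n.+1)%:~R) by apply: mulr_ge0; [apply: mulr_ge0|]; lra.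
  have -> : P - th * c * (e n.+1)%:~R = (1 - th) * (P - r) + th * (P - c * d%:~R + K) + th * c * (d%:~R + 1 - (e n.+1)%:~R) + ((1 - th) * r - th * K - th * c) by ring.
  lra.
rewrite fkXr; apply/fine_cvgP; split.
  near=> eps.
  have e0 : 0 < eps by near: eps; exact: nbhs_right_gt.
  have ec : eps < c by near: eps; exact: nbhs_right_lt.
  by rewrite -/(g eps) (fin_of _ _ _ (g_lb eps e0 ec) (g_ub eps)).
apply/cvgrPdist_lt => del del0.
have M0 : 0 < (r + K) / c + 1 by have := divr_ge0 (ltW (lt_le_trans c0 (_ : c <= r + K))) (ltW c0); lra.
near=> eps.
have e0 : 0 < eps by near: eps; exact: nbhs_right_gt.
have ec : eps < c by near: eps; exact: nbhs_right_lt.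
have ed : eps < del / ((r + K) / c + 1) by near: eps; apply: nbhs_right_lt; exact: divr_gt0.
have lb := g_lb eps e0 ec; have ub := g_ub eps.
have gE := fin_of _ _ _ lb ub.
rewrite gE in lb ub.
rewrite !lee_fin in lb ub.
rewrite /= -/(g eps).
rewrite ltr_pdivlMr // in ed.
have iden : eps * ((r + K) / c + 1) = eps / c * r + eps / c * K + eps.
  by field; rewrite gt_eqF.
rewrite ger0_norm; lra.
Unshelve. all: by end_near.
Qed.
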